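(* Let $X$ be a Banach space with an extended $\lambda$-approximative basis $(P_\alpha)_{\alpha\in\mathscr{D}}$. Assume that $K$ is a separable subset of $X$ and $(y_n)$ is a semi-normalized weakly null sequence in $K$. Then there exist an increasing sequence $(\alpha_{m_i})_{i\ge0}$ in $\mathscr{D}$ and a basic subsequence $(x_{n_i})$ of $(y_n)$ such that (1) $\lim_{i\to\infty}\big\|P_{\alpha_{m_i}}\big(\frac1N\sum_{k=1}^N x_{n_{i+k}}\big)\big\|=0$ for all $N\in\mathbb{N}$; (2) $\lim_{i\to\infty}\|x_{n_i}-P_{\alpha_{m_i}}(x_{n_i})\|=0$; (3) $\lim_{i\to\infty}\|x-P_{\alpha_{m_i}}(x)\|=0$ for all $x\in K$.
   Context: $X$ has an extended $\lambda$-approximative basis ($\lambda\ge1$) if there is a net $(P_\alpha)_{\alpha\in\mathscr{D}}$ of finite-rank bounded linear operators on $X$ with $x=\lim_\alpha P_\alpha(x)$ for all $x\in X$ and $\sup_\alpha\|P_\alpha\|\le\lambda$. A sequence is semi-normalized if $0<\inf_n\|y_n\|\le\sup_n\|y_n\|<\infty$; it is basic if it is a Schauder basis of its closed linear span. *)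

(* Defs.v *)
From HB Require Import structures.
From mathcomp Require Import all_boot all_order all_algebra.
From mathcomp Require Import all_classical all_reals all_analysis.
Set Implicit Arguments. Unset Strict Implicit. Unset Printing Implicit Defensive.
Import Order.TTheory GRing.Theory Num.Theory.
Import numFieldNormedType.Exports.
Local Open Scope classical_set_scope.
Local Open Scope ring_scope.

Section Defs.
Variables (R : realType) (X : normedModType R).

Definition directed_set (D : Type) (le : D -> D -> Prop) : Prop :=
  [/\ inhabited D, (forall a, le a a),
      (forall a b c, le a b -> le b c -> le a c)
    & (forall a b, exists c, le a c /\ le b c)].

Definition linear_op (T : X -> X) : Prop :=
  forall (k : R) (x y : X), T (k *: x + y) = k *: T x + T y.

Definition finite_rank (T : X -> X) : Prop :=
  exists s : seq X, forall x, exists c : 'I_(size s) -> R,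
    T x = \sum_(i < size s) c i *: s`_i.

Definition op_norm_le (T : X -> X) (lam : R) : Prop :=
  forall x, `|T x| <= lam * `|x|.

Definition net_cvg (D : Type) (le : D -> D -> Prop) (f : D -> X) (l : X) : Prop :=
  forall e : R, 0 < e -> exists a0, forall a, le a0 a -> `|l - f a| < e.

Definition ext_approx_basis (D : Type) (le : D -> D -> Prop) (P : D -> X -> X)
    (lam : R) : Prop :=
  [/\ directed_set le,
      (forall a, linear_op (P a) /\ finite_rank (P a)),
      (forall a, op_norm_le (P a) lam)
    & (forall x, net_cvg le (fun a => P a x) x)].

Definition separable_set (K : set X) : Prop :=
  exists S : set X, [/\ countable S, S `<=` K & K `<=` closure S].

Definition semi_normalized (y : nat -> X) : Prop :=
  exists c C : R, 0 < c /\ forall n, c <= `|y n| <= C.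

Definition weakly_null (y : nat -> X) : Prop :=
  forall f : X -> R,
    (forall (k : R) (x z : X), f (k *: x + z) = k * f x + f z) ->
    continuous f ->
    (fun n => f (y n)) @ \oo --> (0 : R).

Definition lin_span (x : nat -> X) : set X :=
  [set z | exists (N : nat) (c : nat -> R), z = \sum_(i < N) c i *: x i].

Definition series_to (a : nat -> R) (x : nat -> X) (z : X) : Prop :=
  (fun N => \sum_(i < N) a i *: x i) @ \oo --> z.

Definition basic_seq (x : nat -> X) : Prop :=
  forall z, closure (lin_span x) z ->
    (exists a, series_to a x z) /\
    (forall a b, series_to a x z -> series_to b x z -> a = b).

End Defs.

(* Main.v *)
Require Import Defs.
From HB Require Import structures.
From mathcomp Require Import all_boot all_order all_algebra.
From mathcomp Require Import all_classical all_reals all_analysis.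
From mathcomp Require Import ring lra.
Import Order.TTheory GRing.Theory Num.Theory.
Import numFieldNormedType.Exports.
Local Open Scope classical_set_scope.
Local Open Scope ring_scope.
Set Implicit Arguments. Unset Strict Implicit. Unset Printing Implicit Defensive.
Section Seqs.
Variable R : realType.

Definition null (u : nat -> R) := forall e, 0 < e -> exists N, forall n, (N <= n)%N -> `|u n| < e.

Lemma nullP u : null u <-> u @ \oo --> 0.
Proof.
rewrite cvgr0Pnorm_lt; split=> H e e0.
  have [N HN] := H e e0; exists N => // n /= Nn; exact: HN.
have [N _ HN] := H e e0; exists N => n Nn; exact: HN.
Qed.

Lemma cauchy_lim (a : nat -> R) :
  (forall e, 0 < e -> exists N, forall m n, (N <= m)%N -> (N <= n)%N -> `|a m - a n| < e) ->
  exists l, null (fun n => a n - l).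
Proof.
move=> H.
have : cvg (a @ \oo).
  apply/cauchy_cvgP/cauchy_exP => e e0.
  have [N HN] := H e e0; exists (a N); exists N => // n /= Nn.
  rewrite -ball_normE /=; exact: HN.
move=> /cvgrPdist_lt Hc; exists (lim (a @ \oo)) => e e0.
have [N _ HN] := Hc e e0; exists N => n Nn; rewrite distrC; exact: HN.
Qed.
End Seqs.
Section Null.
Variable R : realType.
Lemma null_le (u v : nat -> R) : (forall n, `|u n| <= v n) -> null v -> null u.
Proof.
move=> H Hv e e0; have [N HN] := Hv e e0; exists N => n Nn.
apply: le_lt_trans (H n) _; apply: le_lt_trans (HN n Nn); exact: ler_norm.
Qed.
Lemma nullD (u v : nat -> R) : null u -> null v -> null (fun n => u n + v n).
Proof.
move=> Hu Hv e e0; have e20 : 0 < e / 2 by rewrite divr_gt0.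
have [N1 H1] := Hu _ e20; have [N2 H2] := Hv _ e20; exists (maxn N1 N2) => n Nn.
apply: le_lt_trans (ler_normD _ _) _; rewrite (splitr e) ltrD //.
  by apply: H1; apply: leq_trans Nn; apply: leq_maxl.
by apply: H2; apply: leq_trans Nn; apply: leq_maxr.
Qed.
Lemma nullZ (k : R) (u : nat -> R) : null u -> null (fun n => k * u n).
Proof.
move=> Hu e e0; have k0 : 0 < `|k| + 1 by rewrite ltr_pwDr // normr_ge0.
have [N HN] := Hu (e / (`|k| + 1)) (divr_gt0 e0 k0); exists N => n Nn.
rewrite normrM; apply: (@le_lt_trans _ _ ((`|k| + 1) * `|u n|)).
  by rewrite ler_wpM2r // lerDl.
by rewrite mulrC -ltr_pdivlMr // HN.
Qed.
Lemma null_norm (u : nat -> R) : null u -> null (fun n => `|u n|).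
Proof. by move=> Hu e e0; have [N HN] := Hu e e0; exists N => n Nn; rewrite normr_id HN. Qed.
Lemma null0 : null (fun _ : nat => 0 : R).
Proof. by move=> e e0; exists 0%N => n _; rewrite normr0. Qed.
End Null.
Section Lin.
Variables (R : realType) (X : normedModType R).

Lemma lin0 (T : X -> X) : linear_op T -> T 0 = 0.
Proof.
move=> HT; have := HT 1 0 0; rewrite !scale1r !addr0 => h.
by apply: (addrI (T 0)); rewrite addr0 -h.
Qed.
Lemma linD (T : X -> X) : linear_op T -> forall x z, T (x + z) = T x + T z.
Proof. by move=> HT x z; rewrite -[x in LHS]scale1r HT scale1r. Qed.
Lemma linZ (T : X -> X) : linear_op T -> forall k x, T (k *: x) = k *: T x.
Proof. by move=> HT k x; rewrite -[k *: x]addr0 HT lin0 // addr0. Qed.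
Lemma linN (T : X -> X) : linear_op T -> forall x, T (- x) = - T x.
Proof. by move=> HT x; rewrite -scaleN1r linZ // scaleN1r. Qed.
Lemma linB (T : X -> X) : linear_op T -> forall x z, T (x - z) = T x - T z.
Proof. by move=> HT x z; rewrite linD // linN. Qed.
Lemma lin_sum (T : X -> X) : linear_op T -> forall (I : Type) (r : seq I) (Pr : pred I) (F : I -> X),
  T (\sum_(i <- r | Pr i) F i) = \sum_(i <- r | Pr i) T (F i).
Proof.
move=> HT I r Pr F; elim/big_rec2: _ => [|i y1 y2 _ <-]; first exact: lin0.
by rewrite linD.
Qed.

Definition linf (f : X -> R) := forall (k : R) (x z : X), f (k *: x + z) = k * f x + f z.

Lemma linf_cont (f : X -> R) (M : R) : linf f -> (forall x, `|f x| <= M * `|x|) -> continuous f.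
Proof.
move=> Hf HM x; apply/cvgrPdist_lt => e e0.
have M0 : 0 < `|M| + 1 by rewrite ltr_pwDr // normr_ge0.
apply/nbhs_ballP; exists (e / (`|M| + 1)); first by rewrite /= divr_gt0.
move=> t; rewrite -ball_normE /= => Hxt.
have -> : f x - f t = f (x - t).
  have := Hf (-1) t x; rewrite scaleN1r addrC => ->; ring.
apply: le_lt_trans (HM _) _.
apply: (@le_lt_trans _ _ ((`|M| + 1) * `|x - t|)).
  by rewrite ler_wpM2r // (le_trans (ler_norm _)) // lerDl.
by rewrite mulrC -ltr_pdivlMr.
Qed.

Fixpoint spanL (s : seq X) (w : X) : Prop :=
  match s with
  | [::] => w = 0
  | v :: s' => exists a u, spanL s' u /\ w = a *: v + u
  end.

Lemma spanL0 s : spanL s 0.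
Proof. elim: s => [//|v s IH] /=; exists 0, 0; by rewrite scale0r addr0. Qed.

Lemma spanLD s u w : spanL s u -> spanL s w -> spanL s (u + w).
Proof.
elim: s u w => [|v s IH] u w /=; first by move=> -> ->; rewrite addr0.
move=> [a [u' [Hu ->]]] [b [w' [Hw ->]]]; exists (a + b), (u' + w'); split; first exact: IH.
by rewrite scalerDl; rewrite -!addrA; congr (_ + _); rewrite addrCA.
Qed.

Lemma spanLZ s k u : spanL s u -> spanL s (k *: u).
Proof.
elim: s u => [|v s IH] u /=; first by move=> ->; rewrite scaler0.
move=> [a [u' [Hu ->]]]; exists (k * a), (k *: u'); split; first exact: IH.
by rewrite scalerDr scalerA.
Qed.

Lemma spanLN s u : spanL s u -> spanL s (- u).
Proof. by move=> H; rewrite -scaleN1r; apply: spanLZ. Qed.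
Lemma spanLB s u w : spanL s u -> spanL s w -> spanL s (u - w).
Proof. by move=> Hu Hw; apply: spanLD => //; apply: spanLN. Qed.

Lemma spanL_sum (s : seq X) (c : 'I_(size s) -> R) :
  spanL s (\sum_(i < size s) c i *: s`_i).
Proof.
elim: s c => [|v s IH] c /=; first by rewrite big_ord0.
rewrite big_ord_recl /=; exists (c ord0), (\sum_(i < size s) c (lift ord0 i) *: s`_i).
split=> //; exact: IH.
Qed.

End Lin.
Lemma inv_small (R : realType) (e : R) : 0 < e -> exists N, forall n, (N <= n)%N -> n.+1%:R^-1 < e.
Proof. by move=> e0; have [N _ H] := near_infty_natSinv_lt (PosNum e0); exists N => n Nn; exact: H. Qed.

Section FR.
Variables (R : realType) (X : normedModType R).

Lemma decompB (v u1 u2 : X) (a b : R) :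
  (a - b) *: v + (u1 - u2) = (a *: v + u1) - (b *: v + u2).
Proof. by rewrite scalerBl opprD addrACA. Qed.

Lemma subBB (w a b : X) : (w - a) - (w - b) = b - a.
Proof. by rewrite opprB addrC addrA subrK. Qed.

Lemma decomp2 (w v u : X) (a l : R) : w - l *: v - u = (w - (a *: v + u)) + (a - l) *: v.
Proof. by rewrite scalerBl opprD !addrA (addrAC _ (- u) (a *: v)) subrK addrAC. Qed.

Lemma coef_bound (s : seq X) v d : 0 < d -> (forall u, spanL s u -> d <= `|v - u|) ->
  forall a u, spanL s u -> `|a| * d <= `|a *: v + u|.
Proof.
move=> d0 Hd a u Hu; have [->|a0] := eqVneq a 0; first by rewrite normr0 mul0r normr_ge0.
have -> : a *: v + u = a *: (v - (- a^-1) *: u).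
  by rewrite scalerBr scalerA mulrN mulfV // scaleN1r opprK.
by rewrite normrZ ler_wpM2l //; apply: Hd; apply: spanLZ.
Qed.

Lemma decomp_uniq (s : seq X) v d : 0 < d -> (forall u, spanL s u -> d <= `|v - u|) ->
  forall a1 a2 u1 u2, spanL s u1 -> spanL s u2 -> a1 *: v + u1 = a2 *: v + u2 -> a1 = a2 /\ u1 = u2.
Proof.
move=> d0 Hd a1 a2 u1 u2 H1 H2 E.
have := coef_bound d0 Hd (a1 - a2) (spanLB H1 H2).
rewrite decompB E subrr normr0 pmulr_lle0 // normr_le0 subr_eq0 => /eqP Ea.
by split=> //; move: E; rewrite Ea => /addrI.
Qed.

Lemma fr_main (s : seq X) :
  (forall w, (forall e, 0 < e -> exists u, spanL s u /\ `|w - u| < e) -> spanL s w) /\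
  (forall T, linear_op T -> (exists L, forall x, `|T x| <= L * `|x|) -> (forall x, spanL s (T x)) ->
     forall y, weakly_null y -> null (fun n => `|T (y n)|)).
Proof.
elim: s => [|v s [IHc IHf]].
  split.
    move=> w Hw /=; have [//|w0] := eqVneq w 0.
    have hw : 0 < `|w| by rewrite normr_gt0.
    have [u [/= -> ]] := Hw `|w| hw; by rewrite subr0 ltxx.
  by move=> T _ _ HT y _; apply: (null_le _ (@null0 R)) => n; rewrite (HT (y n)) !normr0.
have [[d [d0 Hd]] | Hns] := pselect (exists d, 0 < d /\ forall u, spanL s u -> d <= `|v - u|).
  split.
    move=> w Hw.
    have : forall k : nat, exists p : R * X, spanL s p.2 /\ `|w - (p.1 *: v + p.2)| < k.+1%:R^-1.
      move=> k; have hk : 0 < k.+1%:R^-1 :> R by rewrite invr_gt0 ltr0n.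
      have [u [[a [u' [Hu' ->]]] Hwu]] := Hw k.+1%:R^-1 hk.
      by exists (a, u').
    move=> /choice [p Hp].
    have Hcoef : forall k l, `|(p k).1 - (p l).1| * d <=
        `|w - ((p l).1 *: v + (p l).2)| + `|w - ((p k).1 *: v + (p k).2)|.
      move=> k l; apply: le_trans (coef_bound d0 Hd ((p k).1 - (p l).1) (spanLB (Hp k).1 (Hp l).1)) _.
      rewrite decompB.
      have -> : (p k).1 *: v + (p k).2 - ((p l).1 *: v + (p l).2) =
         (w - ((p l).1 *: v + (p l).2)) - (w - ((p k).1 *: v + (p k).2)).
        by rewrite subBB.
      exact: ler_normB.
    have [l Hl] : exists l, null (fun k => (p k).1 - l).
      apply: cauchy_lim => e e0.
      have hed : 0 < e * d / 2 by rewrite divr_gt0 // mulr_gt0.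
      have [N HN] := inv_small hed.
      exists N => m n Nm Nn.
      rewrite -(ltr_pM2r d0); apply: le_lt_trans (Hcoef m n) _.
      rewrite [e * d]splitr ltrD //.
        by apply: lt_trans (HN n Nn); exact: (Hp n).2.
      by apply: lt_trans (HN m Nm); exact: (Hp m).2.
    have Hwl : spanL s (w - l *: v).
      apply: IHc => e e0.
      have v0 : 0 < `|v| + 1 by rewrite ltr_pwDr // normr_ge0.
      have he2 : 0 < e / 2 by rewrite divr_gt0.
      have [N1 H1] := inv_small he2.
      have [N2 H2] := Hl (e / 2 / (`|v| + 1)) (divr_gt0 he2 v0).
      pose k := maxn N1 N2.
      exists (p k).2; split; first exact: (Hp k).1.
      have -> : w - l *: v - (p k).2 = (w - ((p k).1 *: v + (p k).2)) + ((p k).1 - l) *: v.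
        by rewrite (decomp2 _ _ _ (p k).1).
      apply: le_lt_trans (ler_normD _ _) _; rewrite [e]splitr ltrD //.
        by apply: lt_trans (H1 k (leq_maxl _ _)); exact: (Hp k).2.
      rewrite normrZ; apply: (@le_lt_trans _ _ (`|(p k).1 - l| * (`|v| + 1))).
        by rewrite ler_wpM2l // lerDl.
      by rewrite -ltr_pdivlMr // H2 // leq_maxr.
    by exists l, (w - l *: v); split=> //; rewrite addrC subrK.
  move=> T HT [L HL] HTs y Hy.
  have : forall x, exists p : R * X, spanL s p.2 /\ T x = p.1 *: v + p.2.
    by move=> x; have [a [u [Hu E]]] := HTs x; exists (a, u).
  move=> /choice [g Hg].
  pose f := fun x => (g x).1; pose T' := fun x => (g x).2.
  have Hdec : forall x, T x = f x *: v + T' x by move=> x; exact: (Hg x).2.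
  have HT's : forall x, spanL s (T' x) by move=> x; exact: (Hg x).1.
  have Hlin : forall k x z, f (k *: x + z) = k * f x + f z /\ T' (k *: x + z) = k *: T' x + T' z.
    move=> k x z; apply: (decomp_uniq d0 Hd (HT's _) (spanLD (spanLZ k (HT's x)) (HT's z))).
    rewrite -Hdec HT !Hdec scalerDr scalerA scalerDl; exact: addrACA.
  have Hf : linf f by move=> k x z; exact: (Hlin k x z).1.
  have HT'l : linear_op T' by move=> k x z; exact: (Hlin k x z).2.
  have Hfb : forall x, `|f x| <= (L / d) * `|x|.
    move=> x; rewrite mulrAC ler_pdivlMr //; apply: le_trans (coef_bound d0 Hd (f x) (HT's x)) _.
    by rewrite -Hdec.
  have Hfn : null (fun n => f (y n)) := (nullP _).2 (Hy f Hf (linf_cont Hf Hfb)).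
  have HT'b : exists L', forall x, `|T' x| <= L' * `|x|.
    exists (L + L / d * `|v|) => x.
    have -> : T' x = T x - f x *: v by rewrite Hdec addrAC subrr add0r.
    apply: le_trans (ler_normB _ _) _; rewrite normrZ mulrDl lerD //.
    by rewrite mulrAC ler_wpM2r.
  have HT'n := IHf T' HT'l HT'b HT's y Hy.
  apply: (null_le _ (nullD HT'n (nullZ `|v| (null_norm Hfn)))) => n.
  rewrite normr_id Hdec addrC; apply: le_trans (ler_normD _ _) _.
  by rewrite normrZ mulrC.
have Hv : spanL s v.
  apply: IHc => e e0.
  case: (pselect (exists u, spanL s u /\ `|v - u| < e)) => // Hno; exfalso; apply: Hns.
  exists e; split => // u Hu; rewrite leNgt; apply/negP => Hlt; apply: Hno; by exists u.
have Hdown : forall w, spanL (v :: s) w -> spanL s w.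
  by move=> w [a [u [Hu ->]]]; apply: spanLD (spanLZ a Hv) Hu.
have Hup : forall w, spanL s w -> spanL (v :: s) w.
  by move=> w Hw; exists 0, w; rewrite scale0r add0r.
split.
  move=> w Hw; apply/Hup/IHc => e e0; have [u [Hu Hwu]] := Hw e e0.
  by exists u; split=> //; apply: Hdown.
by move=> T HT HL HTs; apply: IHf => // x; apply: Hdown.
Qed.

End FR.

Section FR2.
Variables (R : realType) (X : normedModType R).
Lemma fr_null (T : X -> X) (L : R) (y : nat -> X) : linear_op T -> finite_rank T ->
  op_norm_le T L -> weakly_null y -> null (fun n => `|T (y n)|).
Proof.
move=> HT [s Hs] HL Hy; apply: (fr_main s).2 => //; first by exists L.
by move=> x; have [c ->] := Hs x; apply: spanL_sum.
Qed.
End FR2.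
Section Helpers.
Variables (R : realType) (X : normedModType R).
Lemma small0 (r : R) : (forall e, 0 < e -> `|r| <= e) -> r = 0.
Proof.
move=> H; have [//|r0] := eqVneq r 0.
have h : 0 < `|r| / 2 by rewrite divr_gt0 // normr_gt0.
have := H _ h; have : 0 < `|r| by rewrite normr_gt0.
move=> ? ?; exfalso; lra.
Qed.
Lemma telesc (a b d : X) : (a - b) + (b - d) = a - d.
Proof. by rewrite addrA subrK. Qed.
Lemma closure_approx (A : set X) z : closure A z -> forall r, 0 < r -> exists w, A w /\ `|z - w| < r.
Proof.
rewrite closureEnbhs => Hz r r0.
have [w [Aw Bw]] := Hz A (ball z r) (fun _ h => h) (nbhsx_ballx z r r0).
by exists w; split=> //; move: Bw; rewrite -ball_normE.
Qed.
Lemma null_sum (n : nat) (u : nat -> nat -> R) : (forall i, null (u i)) -> null (fun l => \sum_(i < n) u i l).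
Proof.
move=> H; elim: n => [|K IH]; first by apply: (null_le _ (@null0 R)) => n; rewrite big_ord0 normr0.
apply: (null_le _ (nullD (null_norm IH) (null_norm (H K)))) => n; rewrite big_ord_recr /=.
exact: ler_normD.
Qed.
End Helpers.
Section Basic.
Variables (R : realType) (X : normedModType R).
Variables (x : nat -> X) (Q : nat -> X -> X) (lam c : R) (dl : nat -> R).
Hypotheses (c0 : 0 < c) (lam0 : 0 <= lam) (Hx : forall j, c <= `|x j|)
  (HQl : forall k, linear_op (Q k)) (HQb : forall k z, `|Q k z| <= lam * `|z|)
  (Ha : forall j k, (j <= k)%N -> `|x j - Q k (x j)| <= dl j)
  (Hb : forall j k, (k < j)%N -> `|Q k (x j)| <= dl j)
  (dl0 : forall j, 0 <= dl j)
  (Hs : forall N, \sum_(j < N) dl j <= c / 4).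

Lemma key (N : nat) (a : nat -> R) :
  (forall m, (m <= N)%N -> `|\sum_(i < m) a i *: x i| <= 2 * lam * `|\sum_(i < N) a i *: x i|) /\
  (forall j, (j < N)%N -> `|a j| <= 4 * lam * `|\sum_(i < N) a i *: x i| / c).
Proof.
set z := \sum_(i < N) a i *: x i.
set A := \sum_(j < N) `|a j| * dl j.
have A0 : 0 <= A by apply: sumr_ge0 => j _; rewrite mulr_ge0.
have S1 : forall k, (k < N)%N -> `|Q k z - \sum_(i < k.+1) a i *: x i| <= A.
  move=> k kN.
  rewrite (big_ord_widen N (fun i => a i *: x i) kN) big_mkcond /= /z lin_sum //.
  rewrite -sumrB; apply: le_trans (ler_norm_sum _ _ _) _; apply: ler_sum => i _.
  rewrite linZ //; case: ifP => ik.
    by rewrite -scalerBr normrZ ler_wpM2l // distrC Ha.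
  by rewrite subr0 normrZ ler_wpM2l // Hb // ltnNge -ltnS ik.
have S2 : forall m, (m <= N)%N -> `|\sum_(i < m) a i *: x i| <= lam * `|z| + A.
  case=> [|k] kN; first by rewrite big_ord0 normr0 addr_ge0 // mulr_ge0.
  have := S1 k kN; set S := \sum_(i < k.+1) _ => H.
  have -> : S = Q k z - (Q k z - S) by rewrite opprB addrC subrK.
  by apply: le_trans (ler_normB _ _) _; rewrite lerD.
have S4 : forall j, (j < N)%N -> `|a j| * c <= 2 * (lam * `|z| + A).
  move=> j jN; apply: (@le_trans _ _ `|a j *: x j|); first by rewrite normrZ ler_wpM2l.
  have -> : a j *: x j = \sum_(i < j.+1) a i *: x i - \sum_(i < j) a i *: x i.
    by rewrite big_ord_recr /= addrAC subrr add0r.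
  apply: le_trans (ler_normB _ _) _; rewrite mulr2n mulrDl mul1r lerD //.
    exact: S2.
  by apply: S2; apply: ltnW.
have S5 : A <= lam * `|z|.
  have : A <= (lam * `|z| + A) / 2.
    apply: (@le_trans _ _ (\sum_(j < N) (2 * (lam * `|z| + A) / c) * dl j)).
      apply: ler_sum => j _; apply: ler_wpM2r => //.
      by rewrite ler_pdivlMr // S4.
    rewrite -mulr_sumr.
    have Hc : 0 <= 2 * (lam * `|z| + A) / c by rewrite divr_ge0 ?mulr_ge0 ?addr_ge0 ?mulr_ge0 // ltW.
    apply: le_trans (ler_wpM2l Hc (Hs N)) _.
    have cn : c != 0 by rewrite gt_eqF.
    have -> : 2 * (lam * `|z| + A) / c * (c / 4) = (lam * `|z| + A) / 2 by field.
    done.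
  move=> H; lra.
split.
  move=> m mN; apply: le_trans (S2 m mN) _; lra.
move=> j jN; rewrite ler_pdivlMr //; apply: le_trans (S4 j jN) _; lra.
Qed.

Lemma pad_sum N M (a : nat -> R) : (N <= M)%N ->
  \sum_(i < M) (if (i < N)%N then a i else 0) *: x i = \sum_(i < N) a i *: x i.
Proof.
move=> NM; rewrite (big_ord_widen M (fun i => a i *: x i) NM) [RHS]big_mkcond /=.
by apply: eq_bigr => i _; case: ifP => _; rewrite ?scale0r.
Qed.

Lemma coef_small (N : nat) (a : nat -> R) j e : (j < N)%N -> 0 < e ->
  `|\sum_(i < N) a i *: x i| < e * c / (4 * lam + 1) -> `|a j| <= e.
Proof.
move=> jN e0 H; apply: le_trans ((key N a).2 j jN) _.
have l1 : 0 < 4 * lam + 1 by rewrite ltr_wpDl // mulr_ge0.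
rewrite ler_pdivrMr //; apply: (@le_trans _ _ ((4 * lam + 1) * `|\sum_(i < N) a i *: x i|)).
  by rewrite ler_wpM2r // lerDl.
by rewrite mulrC -ler_pdivlMr // ltW.
Qed.

Lemma basic_main : basic_seq x.
Proof.
move=> z Hz; split; last first.
  move=> a b; rewrite /series_to => Ha' Hb'; apply: funext => j; apply/eqP; rewrite -subr_eq0; apply/eqP.
  apply: small0 => e e0.
  have E : forall N, \sum_(i < N) (a i - b i) *: x i =
      \sum_(i < N) a i *: x i - \sum_(i < N) b i *: x i.
    move=> N; rewrite -sumrB; apply: eq_bigr => i _; exact: scalerBl.
  have HT : (fun N => \sum_(i < N) (a i - b i) *: x i) @ \oo --> 0.
    have H := cvgB Ha' Hb'; rewrite subrr in H; rewrite (funext E); exact: (H _).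
  have HTn : null (fun N => `|\sum_(i < N) (a i - b i) *: x i|).
    apply/nullP; have H := cvg_norm HT; rewrite normr0 in H; exact: H.
  have l1 : 0 < 4 * lam + 1 by rewrite ltr_wpDl // mulr_ge0.
  have ep : 0 < e * c / (4 * lam + 1) by rewrite !divr_gt0 ?mulr_gt0.
  have [N HN] := HTn _ ep.
  apply: (coef_small (N := maxn N j.+1) (a := fun i => a i - b i)) => //.
    by rewrite leq_max ltnSn orbT.
  by have := HN (maxn N j.+1) (leq_maxl _ _); rewrite normr_id.
have Hp0 : forall m : nat, exists p : nat * (nat -> R),
    `|z - \sum_(i < p.1) p.2 i *: x i| < m.+1%:R^-1.
  move=> m; have hm : 0 < m.+1%:R^-1 :> R by rewrite invr_gt0 ltr0n.
  by have [w [[N [a ->]] Hw]] := closure_approx Hz hm; exists (N, a).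
have [p Hp] := choice Hp0.
pose ab m i := if (i < (p m).1)%N then (p m).2 i else 0.
pose w m := \sum_(i < (p m).1) (p m).2 i *: x i.
have Hw : forall m M, ((p m).1 <= M)%N -> \sum_(i < M) ab m i *: x i = w m.
  by move=> m M HM; rewrite /ab /w pad_sum.
have E1 : forall m l M, \sum_(i < M) (ab m i - ab l i) *: x i =
    \sum_(i < M) ab m i *: x i - \sum_(i < M) ab l i *: x i.
  by move=> m l M; rewrite -sumrB; apply: eq_bigr => i _; rewrite scalerBl.
have Hdiff : forall m l K, exists M, (K <= M)%N /\ \sum_(i < M) (ab m i - ab l i) *: x i = w m - w l.
  move=> m l K; exists (maxn K (maxn (p m).1 (p l).1)); split; first exact: leq_maxl.
  have h1 : ((p m).1 <= maxn K (maxn (p m).1 (p l).1))%N by rewrite !leq_max leqnn !orbT.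
  have h2 : ((p l).1 <= maxn K (maxn (p m).1 (p l).1))%N by rewrite !leq_max leqnn !orbT.
  by rewrite E1 (Hw m _ h1) (Hw l _ h2).
have Hwml : forall m l, `|w m - w l| <= m.+1%:R^-1 + l.+1%:R^-1.
  move=> m l; rewrite -(subBB z (w l) (w m)); apply: le_trans (ler_normB _ _) _.
  by rewrite addrC lerD // ltW // Hp.
have Hco : forall m l j, `|ab m j - ab l j| <= 4 * lam * `|w m - w l| / c.
  move=> m l j; have [M [jM E]] := Hdiff m l j.+1.
  by have := (key M (fun i => ab m i - ab l i)).2 j jM; rewrite E.
have Hps : forall m l K, `|\sum_(i < K) (ab m i - ab l i) *: x i| <= 2 * lam * `|w m - w l|.
  move=> m l K; have [M [KM E]] := Hdiff m l K.
  by have := (key M (fun i => ab m i - ab l i)).1 K KM; rewrite E.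
have Hcau : forall j, exists aj, null (fun m => ab m j - aj).
  move=> j; apply: cauchy_lim => e e0.
  have l8 : 0 < 8 * lam + 1 by rewrite ltr_wpDl // mulr_ge0.
  have ep : 0 < e * c / (8 * lam + 1) by rewrite !divr_gt0 ?mulr_gt0.
  have [N HN] := inv_small ep; exists N => m l Nm Nl.
  apply: le_lt_trans (Hco m l j) _.
  have H1 := HN m Nm; have H2 := HN l Nl; have Hw' := Hwml m l.
  have Hr : e * c / (8 * lam + 1) * (8 * lam + 1) = e * c by rewrite divfK // gt_eqF.
  move: H1 H2 Hw' Hr; set r := e * c / (8 * lam + 1); set t := `|w m - w l|.
  set u := m.+1%:R^-1; set v := l.+1%:R^-1 => H1 H2 Hw' Hr.
  rewrite ltr_pdivrMr //.
  have t0 : 0 <= t by rewrite normr_ge0.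
  nra.
have [a Ha0] := choice Hcau.
exists a; rewrite /series_to; apply/cvgrPdist_lt => e e0.
have l4 : 0 < 4 * lam + 1 by rewrite ltr_wpDl // mulr_ge0.
have e2 : 0 < e / 2 by rewrite divr_gt0.
have ep : 0 < e / 2 / (4 * lam + 1) by rewrite divr_gt0.
have [m Hm] := inv_small ep; have Hm' := Hm m (leqnn m).
exists (p m).1 => // K /= HK.
have Hnl := @null_sum R K (fun i l => `|x i| * `|ab l i - a i|) (fun i => nullZ `|x i| (null_norm (Ha0 i))).
have [N1 HN1] := Hnl _ e2.
pose l := maxn N1 m.
have Hl1 := HN1 l (leq_maxl _ _).
have Hlm : l.+1%:R^-1 <= m.+1%:R^-1 :> R.
  by rewrite lef_pV2 ?posrE ?ltr0n // ler_nat ltnS leq_maxr.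
rewrite -(telesc z (w m)) -(telesc (w m) (\sum_(i < K) ab l i *: x i)).
apply: le_lt_trans (ler_normD _ _) _.
have B1 := Hp m.
have B2 : `|w m - \sum_(i < K) ab l i *: x i| <= 2 * lam * (m.+1%:R^-1 + l.+1%:R^-1).
  rewrite -(Hw m K HK) -E1; apply: le_trans (Hps m l K) _.
  by rewrite ler_wpM2l ?mulr_ge0 // Hwml.
have B3 : `|\sum_(i < K) ab l i *: x i - \sum_(i < K) a i *: x i| < e / 2.
  rewrite -sumrB; apply: le_lt_trans (ler_norm_sum _ _ _) _.
  apply: le_lt_trans _ Hl1; apply: le_trans (ler_norm _); apply: ler_sum => i _.
  by rewrite -scalerBl normrZ mulrC.
have B23 := le_lt_trans (ler_normD _ _) (ler_ltD B2 B3).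
move: B1 B23 Hm' Hlm; set u := m.+1%:R^-1; set v := l.+1%:R^-1.
set t1 := `|z - w m|; set t2 := `|_ + _|.
have Hr : e / 2 / (4 * lam + 1) * (4 * lam + 1) = e / 2 by rewrite divfK // gt_eqF.
move: Hr; set r := e / 2 / (4 * lam + 1) => Hr B1 B23 Hm' Hlm.
have v0 : 0 <= v by rewrite invr_ge0 ler0n.
have P1 : lam * v <= lam * u by rewrite ler_wpM2l.
have P2 : lam * u <= lam * r by rewrite ler_wpM2l // ltW.
nra.
Qed.
End Basic.
Record St (D X R : Type) := mkSt { sn : nat; sa : D; sF : X -> R; sH : D -> R }.

Fixpoint iterS (T : Type) (f : nat * T -> T) (s0 : T) (k : nat) : T :=
  match k with 0 => s0 | k'.+1 => f (k', iterS f s0 k') end.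

Section Main.
Variables (R : realType) (X : normedModType R) (D : Type) (le : D -> D -> Prop)
  (P : D -> X -> X) (lam : R) (y e : nat -> X) (eps : nat -> R).
Hypotheses (Hdir : directed_set le) (HPl : forall a, linear_op (P a))
  (HPf : forall a, finite_rank (P a)) (HPb : forall a, op_norm_le (P a) lam)
  (HPc : forall x, net_cvg le (fun a => P a x) x) (Hy : weakly_null y)
  (eps0 : forall i, 0 < eps i).

Definition netnull (H : D -> R) := forall r, 0 < r -> exists a0, forall b, le a0 b -> H b < r.

Lemma le_trans_D a b d : le a b -> le b d -> le a d.
Proof. by case: Hdir => _ _ Ht _; apply: Ht. Qed.

Lemma netnullD H1 H2 : netnull H1 -> netnull H2 -> netnull (fun b => H1 b + H2 b).
Proof.
move=> N1 N2 r r0; have r2 : 0 < r / 2 by rewrite divr_gt0.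
have [a1 H1a] := N1 _ r2; have [a2 H2a] := N2 _ r2.
case: Hdir => _ _ _ Hub; have [a3 [h1 h2]] := Hub a1 a2.
exists a3 => b hb; rewrite [r]splitr ltrD //.
  by apply: H1a; apply: le_trans_D hb.
by apply: H2a; apply: le_trans_D hb.
Qed.

Lemma netnull_P x : netnull (fun b => `|x - P b x|).
Proof. by move=> r r0; have [a0 Ha] := HPc x r0; exists a0. Qed.

Definition Inv (s : St D X R) := null (fun m => sF s (y m)) /\ netnull (sH s).

Definition Rel i (s s' : St D X R) :=
  (sn s < sn s')%N /\ le (sa s) (sa s') /\ `|sF s (y (sn s'))| < eps i /\
      sF s' = (fun x => sF s x + `|P (sa s') x|) /\
      sH s' = (fun b => sH s b + `|y (sn s') - P b (y (sn s'))| + `|e i - P b (e i)|) /\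
      (forall b, le (sa s') b -> sH s' b < eps i).

Lemma step i s : Inv s -> exists s', Inv s' /\ Rel i s s'.
Proof.
case: s => n a F H [HF HH] /=.
have [N HN] := HF (eps i) (eps0 i).
pose n' := maxn N n.+1.
pose H' := fun b => H b + `|y n' - P b (y n')| + `|e i - P b (e i)|.
have HH' : netnull H' := netnullD (netnullD HH (netnull_P _)) (netnull_P _).
have [a0 Ha0] := HH' (eps i) (eps0 i).
case: Hdir => _ _ _ Hub; have [a' [Haa' Ha0a']] := Hub a a0.
exists (mkSt n' a' (fun x => F x + `|P a' x|) H'); split.
  split=> //=; apply: nullD HF _.
  exact: (fr_null (HPl a') (HPf a') (HPb a') Hy).
split; first by rewrite /= /n' leq_max ltnSn orbT.
split; first exact: Haa'.
split; first by apply: HN; apply: leq_maxl.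
split; first by [].
split; first by [].
by move=> b hb /=; apply: Ha0; apply: le_trans_D hb.
Qed.

Lemma construction : exists (al : nat -> D) (nn : nat -> nat),
  [/\ (forall i, le (al i) (al i.+1)), (forall i, (nn i < nn i.+1)%N),
      (forall j k, (j <= k)%N -> `|y (nn j) - P (al k) (y (nn j))| < eps k),
      (forall j k, (k < j)%N -> `|P (al k) (y (nn j))| < eps j)
    & (forall j k, (j <= k)%N -> `|e j - P (al k) (e j)| < eps k)].
Proof.
case: (Hdir) => [[a00] _ _ _].
pose s0 := mkSt 0 a00 (fun _ : X => 0 : R) (fun _ : D => 0 : R).
have I0 : Inv s0.
  split; first exact: null0.
  by move=> r r0; exists a00 => b _.
have : forall p : nat * St D X R, exists s', Inv p.2 -> Inv s' /\ Rel p.1 p.2 s'.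
  case=> i s /=; case: (pselect (Inv s)) => h.
    by have [s' Hs'] := step i h; exists s'.
  by exists s.
move=> /choice [f Hf].
pose st := iterS f s0.
have HI : forall k, Inv (st k) /\ Rel k (st k) (st k.+1).
  elim=> [|k [IHi IHr]].
    by split; [exact: I0 | exact: (Hf (0%N, s0) I0).2].
  have Ik1 : Inv (st k.+1) := (Hf (k, st k) IHi).1.
  by split; [exact: Ik1 | exact: (Hf (k.+1, st k.+1) Ik1).2].
have F0 : forall k x, 0 <= sF (st k) x.
  elim=> [|k IH] x; first by [].
  by have [_ [_ [_ [_ [-> [_ _]]]]]] := HI k; rewrite addr_ge0.
have H0 : forall k b, 0 <= sH (st k) b.
  elim=> [|k IH] b; first by [].
  by have [_ [_ [_ [_ [_ [-> _]]]]]] := HI k; rewrite !addr_ge0.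
have Fmon : forall k t x, (1 <= t <= k)%N -> `|P (sa (st t)) x| <= sF (st k) x.
  elim=> [|k IH] t x; first by case: t => [|t]; rewrite ?andbF.
  have [_ [_ [_ [_ [-> [_ _]]]]]] := HI k.
  case/andP=> t1; rewrite leq_eqVlt => /orP[/eqP ->|tk].
    by rewrite lerDr.
  by apply: le_trans (IH t x _) _; [rewrite t1 | rewrite lerDl].
have Hmon : forall k t b, (1 <= t <= k)%N ->
    `|y (sn (st t)) - P b (y (sn (st t)))| <= sH (st k) b /\
    `|e t.-1 - P b (e t.-1)| <= sH (st k) b.
  elim=> [|k IH] t b; first by case: t => [|t]; rewrite ?andbF.
  have [_ [_ [_ [_ [_ [-> _]]]]]] := HI k.
  case/andP=> t1; rewrite leq_eqVlt => /orP[/eqP ->|tk] /=.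
    have := H0 k b; have := normr_ge0 (e k - P b (e k)).
    have := normr_ge0 (y (sn (st k.+1)) - P b (y (sn (st k.+1)))).
    move=> ? ? ?; split; lra.
  have t1k : (1 <= t <= k)%N by rewrite t1.
  have [h1 h2] := IH t b t1k.
  have := normr_ge0 (e k - P b (e k)).
  have := normr_ge0 (y (sn (st k.+1)) - P b (y (sn (st k.+1)))).
  move=> ? ?; split; lra.
have Amon : forall j k, (j <= k)%N -> le (sa (st j)) (sa (st k)).
  move=> j; elim=> [|k IH].
    by rewrite leqn0 => /eqP ->; case: Hdir.
  rewrite leq_eqVlt => /orP[/eqP ->|jk]; first by case: Hdir.
  have [_ [_ [Hle [_ [_ [_ _]]]]]] := HI k.
  by apply: le_trans_D (IH jk) Hle.
exists (fun k => sa (st k.+1)), (fun k => sn (st k.+1)); split.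
- by move=> i; have [_ [_ [? [_ [_ [_ _]]]]]] := HI i.+1.
- by move=> i; have [_ [? [_ [_ [_ [_ _]]]]]] := HI i.+1.
- move=> j k jk; have [_ [_ [_ [_ [_ [_ Hlt]]]]]] := HI k.
  apply: le_lt_trans (Hlt _ _); last by case: Hdir.
  have jk' : (1 <= j.+1 <= k.+1)%N by apply/andP; split => //; rewrite ltnS.
  by have [h _] := Hmon k.+1 j.+1 (sa (st k.+1)) jk'.
- move=> j k kj; have [_ [_ [_ [Hlt [_ [_ _]]]]]] := HI j.
  apply: le_lt_trans (Hlt); apply: le_trans (Fmon j k.+1 _ _) (ler_norm _).
  by rewrite kj.
- move=> j k jk; have [_ [_ [_ [_ [_ [_ Hlt]]]]]] := HI k.
  apply: le_lt_trans (Hlt _ _); last by case: Hdir.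
  have jk' : (1 <= j.+1 <= k.+1)%N by apply/andP; split => //; rewrite ltnS.
  by have [_ h] := Hmon k.+1 j.+1 (sa (st k.+1)) jk'.
Qed.
End Main.
Section Eps.
Variables (R : realType) (c : R).
Hypothesis c0 : 0 < c.
Definition epsf (j : nat) : R := c / 4 / ((j.+1 * j.+2)%N)%:R.

Lemma epsf_gt0 j : 0 < epsf j.
Proof. by rewrite /epsf !divr_gt0 // ltr0n muln_gt0. Qed.

Lemma epsf_dec j k : (j <= k)%N -> epsf k <= epsf j.
Proof.
move=> jk; rewrite /epsf ler_pM2l ?divr_gt0 // lef_pV2 ?posrE ?ltr0n ?muln_gt0 //.
by rewrite ler_nat leq_mul // ltnS.
Qed.

Lemma epsf_le j : epsf j <= c / 4 * j.+1%:R^-1.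
Proof.
rewrite /epsf ler_pM2l ?divr_gt0 // lef_pV2 ?posrE ?ltr0n ?muln_gt0 //.
by rewrite ler_nat leq_pmulr.
Qed.

Lemma epsf_null : null epsf.
Proof.
move=> r r0; have c4 : 0 < c / 4 by rewrite divr_gt0.
have [N HN] := inv_small (divr_gt0 r0 c4); exists N => n Nn.
rewrite gtr0_norm ?epsf_gt0 //; apply: le_lt_trans (epsf_le n) _.
by rewrite mulrC -ltr_pdivlMr // HN.
Qed.

Lemma epsf_sum N : \sum_(j < N) epsf j = c / 4 * (1 - N.+1%:R^-1).
Proof.
elim: N => [|N IH]; first by rewrite big_ord0 invr1 subrr mulr0.
rewrite big_ord_recr /= IH /epsf natrM.
have h1 : N.+1%:R != 0 :> R by rewrite pnatr_eq0.
have h2 : N.+2%:R != 0 :> R by rewrite pnatr_eq0.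
field; apply/andP; split; apply/eqP => H; have := ler0n R N; lra.
Qed.

Lemma epsf_sum_le N : \sum_(j < N) epsf j <= c / 4.
Proof.
rewrite epsf_sum -[X in _ <= X]mulr1 ler_pM2l ?divr_gt0 // lerBlDr lerDl invr_ge0 ler0n //.
Qed.
End Eps.
Theorem lemma3p3 (R : realType) (X : completeNormedModType R)
  (D : Type) (le : D -> D -> Prop) (P : D -> X -> X) (lam : R)
  (K : set X) (y : nat -> X) :
  1 <= lam ->
  ext_approx_basis le P lam ->
  separable_set K ->
  (forall n, K (y n)) ->
  semi_normalized y ->
  weakly_null y ->
  exists (alpha : nat -> D) (n : nat -> nat),
    (forall i, le (alpha i) (alpha i.+1)) /\
    (forall i, (n i < n i.+1)%N) /\
    [/\ basic_seq (fun i => y (n i)),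
        (forall N : nat, (0 < N)%N ->
           (fun i => `| P (alpha i) (N%:R^-1 *:
              \sum_(1 <= k < N.+1) y (n (i + k)%N)) |) @ \oo --> (0 : R)),
        (fun i => `| y (n i) - P (alpha i) (y (n i)) |) @ \oo --> (0 : R)
      & (forall x, K x ->
           (fun i => `| x - P (alpha i) x |) @ \oo --> (0 : R))].
Proof.
move=> lam1 [Hdir HPlf HPb HPc] [S [Sc SK KS]] HyK [c [C [c0 Hyc]]] Hy.
have HPl : forall a, linear_op (P a) := fun a => (HPlf a).1.
have HPf : forall a, finite_rank (P a) := fun a => (HPlf a).2.
have lam0 : 0 <= lam by apply: le_trans lam1.
have [e He] : exists e : nat -> X, S `<=` range e.
  have /pcard_surjP [g Hg] := Sc.
  by exists g => x /Hg [n _ <-]; exists n.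
have [al [nn [Hal Hnn Ha Hb He']]] :=
  @construction R X D le P lam y e (epsf c) Hdir HPl HPf HPb HPc Hy (epsf_gt0 c0).
exists al, nn; split => //; split => //; split.
- apply: (@basic_main R X (fun i => y (nn i)) (fun k => P (al k)) lam c (epsf c)).
  + exact: c0.
  + exact: lam0.
  + by move=> j; have /andP[] := Hyc (nn j).
  + by move=> k; apply: HPl.
  + by move=> k z; apply: HPb.
  + move=> j k jk; apply: ltW; apply: lt_le_trans (Ha j k jk) _; exact: epsf_dec.
  + by move=> j k kj; apply: ltW; exact: Hb.
  + by move=> j; apply: ltW; apply: epsf_gt0.
  + exact: epsf_sum_le.
- move=> N N0; apply/nullP => r r0.
  have [M HM] := epsf_null c0 r0; exists M => i Mi.
  rewrite normr_id linZ // lin_sum // normrZ.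
  have Hs : `|\sum_(1 <= k < N.+1) P (al i) (y (nn (i + k)%N))| <= epsf c i *+ N.
    apply: le_trans (ler_norm_sum _ _ _) _.
    rewrite (_ : epsf c i *+ N = \sum_(1 <= k < N.+1) epsf c i); last first.
      by rewrite sumr_const_nat subn1.
    apply: ler_sum_nat => k /andP[k1 _]; apply: ltW.
    apply: lt_le_trans (Hb (i + k)%N i _) (epsf_dec c0 _); last exact: leq_addr.
    by rewrite -addn1 leq_add2l.
  rewrite ger0_norm ?invr_ge0 ?ler0n //.
  apply: le_lt_trans (ler_wpM2l _ Hs) _; first by rewrite invr_ge0 ler0n.
  have N0' : N%:R != 0 :> R by rewrite pnatr_eq0 -lt0n.
  rewrite -[epsf c i *+ N]mulr_natl mulrA mulVf // mul1r.
  exact: le_lt_trans (ler_norm _) (HM i Mi).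
- apply/nullP => r r0; have [M HM] := epsf_null c0 r0; exists M => i Mi.
  rewrite normr_id; apply: lt_trans (Ha i i (leqnn i)) _.
  exact: le_lt_trans (ler_norm _) (HM i Mi).
- move=> x Kx; apply/nullP => r r0.
  have l1 : 0 < 1 + lam by rewrite ltr_pwDl.
  have r2 : 0 < r / 2 by rewrite divr_gt0.
  have r'0 : 0 < r / 2 / (1 + lam) by rewrite divr_gt0.
  have [s [Ss Hxs]] := closure_approx (KS x Kx) r'0.
  have [j _ Ejs] := He s Ss; subst s.
  have [M HM] := epsf_null c0 r2; exists (maxn M j) => i Mi.
  rewrite normr_id -(telesc x (e j)) -(telesc (e j) (P (al i) (e j))) -linB //.
  have T1 := He' j i (leq_trans (leq_maxr _ _) Mi).
  have T2 := le_lt_trans (ler_norm _) (HM i (leq_trans (leq_maxl _ _) Mi)).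
  have T3 : `|P (al i) (e j - x)| <= lam * `|x - e j| by rewrite distrC; apply: HPb.
  have T4 : lam * `|x - e j| <= lam * (r / 2 / (1 + lam)) by rewrite ler_wpM2l // ltW.
  have Hr : r / 2 / (1 + lam) * (1 + lam) = r / 2 by rewrite divfK // gt_eqF.
  apply: le_lt_trans (ler_normD _ _) _.
  have := ler_normD (e j - P (al i) (e j)) (P (al i) (e j - x)).
  move: Hxs T1 T2 T3 T4 Hr; set r' := r / 2 / (1 + lam).
  move=> Hxs T1 T2 T3 T4 Hr H5; lra.
Qed.
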